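(* For every $w\in\mathfrak S(n)$, $$g_w\in T_w+\sum_{w'\in\mathfrak S(n),\ w'<w}R[t_1,\ldots,t_n]\,T_{w'},$$ where $<$ is the (strict) Bruhat order on $\mathfrak S(n)$.
   Context: Standing setup: $R$ is an integral domain, $n\ge 2$, $r\ge 1$, and $q,u_1,\ldots,u_r\in R$ with $q$ invertible in $R$ and $\Delta:=\prod_{1\le j<i\le r}(u_i-u_j)$ invertible in $R$. For $1\le c\le r$ let $F_c(X)\in R[X]$ be the unique polynomial of degree $\le r-1$ with $F_c(u_{c'})=\delta_{c,c'}\Delta$ for all $1\le c'\le r$. The modified Ariki–Koike (Shoji) algebra $\mathcal H_{n,r}=\mathcal H_{n,r}(R,q,u_1,\ldots,u_r)$ is the associative $R$-algebra generated by $t_1,\ldots,t_n,T_1,\ldots,T_{n-1}$ subject to: $(T_i-q)(T_i+q^{-1})=0$; $(t_i-u_1)\cdots(t_i-u_r)=0$; $T_iT_{i+1}T_i=T_{i+1}T_iT_{i+1}$; $T_iT_j=T_jT_i$ for $|i-j|\ge2$; $t_it_j=t_jt_i$; $T_jt_k=t_kT_j$ for $k\ne j,j+1$; and for $2\le j\le n$: $T_{j-1}t_j=t_{j-1}T_{j-1}+\Delta^{-2}\sum_{1\le c_1<c_2\le r}(u_{c_2}-u_{c_1})(q-q^{-1})F_{c_1}(t_{j-1})F_{c_2}(t_j)$ and $T_{j-1}t_{j-1}=t_jT_{j-1}-\Delta^{-2}\sum_{1\le c_1<c_2\le r}(u_{c_2}-u_{c_1})(q-q^{-1})F_{c_1}(t_{j-1})F_{c_2}(t_j)$.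 Write $[1,r]=\{1,\ldots,r\}$; for $\mathbf k=(k_1,\ldots,k_n)\in[1,r]^n$ set $b_{\mathbf k}:=\prod_{i=1}^n\prod_{1\le j\le r,\,j\ne k_i}\frac{t_i-u_j}{u_{k_i}-u_j}$. For $1\le i,j\le n$ let $B'_{i,j}:=-(q-q^{-1})\sum_{\mathbf k,\ k_i<k_j}b_{\mathbf k}$, and for $1\le i\le n-1$ let $g_i:=T_i+B'_{i,i+1}$. For $w\in\mathfrak S(n)$ with reduced expression $w=s_{i_1}\cdots s_{i_l}$ ($s_i=(i\ i+1)$), set $T_w:=T_{i_1}\cdots T_{i_l}$ and $g_w:=g_{i_1}\cdots g_{i_l}$; both are independent of the reduced expression since the $T_i$ and the $g_i$ satisfy the braid relations. $R[t_1,\ldots,t_n]$ is the subalgebra generated by $t_1,\ldots,t_n$. *)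

(* Defs.v *)
From HB Require Import structures.
From mathcomp Require Import all_boot all_order all_algebra all_fingroup.
From Stdlib Require Import Relations.
Set Implicit Arguments. Unset Strict Implicit. Unset Printing Implicit Defensive.
Import Order.TTheory GRing.Theory Num.Theory.
Local Open Scope ring_scope.

(* Convention: n = m.+1 (so n >= 2 iff 1 <= m). Indices are 0-based:
   t i (i : 'I_m.+1) is t_{i+1}; T k (k : 'I_m) is T_{k+1}, which acts on
   positions k and k+1. *)

Definition ord_lo m (k : 'I_m) : 'I_m.+1 := widen_ord (leqnSn m) k.
Definition ord_hi m (k : 'I_m) : 'I_m.+1 := lift ord0 k.
Definition sw m (k : 'I_m) : 'S_m.+1 := tperm (ord_lo k) (ord_hi k).

Definition wordperm m (s : seq 'I_m) : 'S_m.+1 := (\prod_(k <- s) sw k)%g.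

Definition coxlen m (w : 'S_m.+1) (k : nat) : Prop :=
  (exists s : seq 'I_m, size s = k /\ wordperm s = w) /\
  (forall s : seq 'I_m, wordperm s = w -> (k <= size s)%N).

Definition reduced m (s : seq 'I_m) : Prop :=
  forall s' : seq 'I_m, wordperm s' = wordperm s -> (size s <= size s')%N.

Definition bruhat_step m (u v : 'S_m.+1) : Prop :=
  exists a b : 'I_m.+1, a != b /\ v = (u * tperm a b)%g /\
    exists k1 k2, coxlen u k1 /\ coxlen v k2 /\ (k1 < k2)%N.
Definition bruhat_lt m : relation 'S_m.+1 := clos_trans _ (@bruhat_step m).

Section Hecke.
Variables (R : idomainType) (m r : nat) (q : R) (u : 'I_r -> R).
Variables (F : 'I_r -> {poly R}) (A : algType R).
Variables (t : 'I_m.+1 -> A) (T : 'I_m -> A).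

Definition Delta : R := \prod_(j < r) \prod_(i < r | (j < i)%N) (u i - u j).

(** The correction term in the last two defining relations, for the pair
    of positions (a, b) = (j-1, j). *)
Definition Xcorr (a b : 'I_m.+1) : A :=
  (Delta ^- 2) *: \sum_(c1 < r) \sum_(c2 < r | (c1 < c2)%N)
     ((u c2 - u c1) * (q - q^-1)) *: (horner_alg (t a) (F c1) * horner_alg (t b) (F c2)).

Definition bk (k : {ffun 'I_m.+1 -> 'I_r}) : A :=
  \prod_(i < m.+1) \prod_(j < r | j != k i) ((u (k i) - u j)^-1 *: (t i - (u j)%:A)).

Definition Bp (i j : 'I_m.+1) : A :=
  - (q - q^-1) *: \sum_(k : {ffun 'I_m.+1 -> 'I_r} | (k i < k j)%N) bk k.

Definition g (k : 'I_m) : A := T k + Bp (ord_lo k) (ord_hi k).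

Definition prodT (s : seq 'I_m) : A := \prod_(k <- s) T k.
Definition prodg (s : seq 'I_m) : A := \prod_(k <- s) g k.

Inductive in_Rt : A -> Prop :=
| Rt_scal (c : R) : in_Rt (c%:A)
| Rt_gen (i : 'I_m.+1) : in_Rt (t i)
| Rt_add x y : in_Rt x -> in_Rt y -> in_Rt (x + y)
| Rt_mul x y : in_Rt x -> in_Rt y -> in_Rt (x * y).

Definition Hnr_relations : Prop :=
  (forall k, (T k - q%:A) * (T k + (q^-1)%:A) = 0) /\
      (forall i, \prod_(c < r) (t i - (u c)%:A) = 0) /\
      (forall k l : 'I_m, val l = (val k).+1 -> T k * T l * T k = T l * T k * T l) /\
      (forall k l : 'I_m, (val k + 2 <= val l)%N \/ (val l + 2 <= val k)%N ->
          T k * T l = T l * T k) /\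
      (forall i j, t i * t j = t j * t i) /\
      (forall (k : 'I_m) (i : 'I_m.+1), i != ord_lo k -> i != ord_hi k ->
          T k * t i = t i * T k) /\
      (forall k : 'I_m,
          T k * t (ord_hi k) = t (ord_lo k) * T k + Xcorr (ord_lo k) (ord_hi k) /\
          T k * t (ord_lo k) = t (ord_hi k) * T k - Xcorr (ord_lo k) (ord_hi k)).

End Hecke.

(* Main.v *)
Require Import Defs.
From HB Require Import structures.
From mathcomp Require Import all_boot all_order all_algebra all_fingroup.
From mathcomp Require Import zify.
From Stdlib Require Import Relations.
Set Implicit Arguments. Unset Strict Implicit. Unset Printing Implicit Defensive.

Section Perm.
Variable N : nat.

Definition inv (P : 'S_N) : nat :=
  \sum_(p : 'I_N * 'I_N) ((p.1 < p.2) && (P p.2 < P p.1)).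
Definition len (w : 'S_N) := inv (w^-1)%g.

Lemma ordE (x y : 'I_N) : (x == y) = ((x : nat) == y).
Proof. by []. Qed.

Lemma tpermV' (a b x : 'I_N) :
  (tperm a b x : nat) = if (x : nat) == a then (b : nat) else if (x : nat) == b then (a : nat) else x.
Proof.
case: tpermP => [->|->|h1 h2]; rewrite ?eqxx //.
- by case: eqP => // /val_inj ->.
- rewrite ifN ?ifN //; apply/eqP => /val_inj ?; [apply: h2|apply: h1]; done.
Qed.

Lemma tperm_lt (a b x y : 'I_N) : (b : nat) = a.+1 ->
  (x, y) != (a, b) -> (x, y) != (b, a) ->
  (tperm a b x < tperm a b y) = (x < y).
Proof.
move=> hab; rewrite !xpair_eqE !ordE => h1 h2.
rewrite !tpermV'; move: h1 h2.
case: ((x:nat) == a) / eqP; case: ((x:nat) == b) / eqP;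
case: ((y:nat) == a) / eqP; case: ((y:nat) == b) / eqP => /=; lia.
Qed.


Lemma len_adj (w : 'S_N) (a b : 'I_N) : (b : nat) = a.+1 ->
  (w^-1)%g a < (w^-1)%g b -> len (w * tperm a b)%g = (len w).+1.
Proof.
move=> hab hP; rewrite /len invMg tpermV /inv.
set P := (w^-1)%g.
have hinj : injective (fun p : 'I_N * 'I_N => (tperm a b p.1, tperm a b p.2)).
  by move=> [x1 x2] [y1 y2] /= [/perm_inj -> /perm_inj ->].
rewrite (reindex_inj hinj) /=.
have nab : (a, b) != (b, a) by rewrite xpair_eqE ordE hab; apply/nandP; left; lia.
rewrite (bigD1 (a,b)) //= (bigD1 (b,a)) //=.
rewrite [in RHS](bigD1 (a,b)) //= [in RHS](bigD1 (b,a)) //=.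
rewrite !permM !tpermK tpermL tpermR.
have -> : (b < a) = false by lia.
have -> : (a < b) = true by lia.
rewrite hP ltnNge (ltnW hP) /= !add0n add1n; congr _.+1.
apply: eq_bigr => [[x y]] /andP [h1 h2] /=.
rewrite !permM !tpermK tperm_lt //.
all: by rewrite eq_sym.
Qed.

Lemma len_adj' (w : 'S_N) (a b : 'I_N) : (b : nat) = a.+1 ->
  (w^-1)%g b < (w^-1)%g a -> (len (w * tperm a b)%g).+1 = len w.
Proof.
move=> hab hP; set y := (w * tperm a b)%g.
have -> : w = (y * tperm a b)%g by rewrite /y -mulgA tperm2 mulg1.
rewrite len_adj //.
by rewrite /y invMg tpermV !permM tpermL tpermR.
Qed.

Lemma tperm_conj3 (a b c : 'I_N) : a != b -> c != b ->
  tperm a b = (tperm a c * tperm c b * tperm a c)%g.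
Proof.
move=> nab ncb.
have := tpermJ c b (tperm a c); rewrite /conjg tpermV tpermR (tpermD nab ncb).
by move=> h; rewrite -h mulgA.
Qed.

Lemma len_swap_gen d : forall (w : 'S_N) (a b : 'I_N), (b : nat) = a + d.+1 ->
  (w^-1)%g a < (w^-1)%g b -> len w < len (w * tperm a b)%g.
Proof.
elim: d => [|d IH] w a b hab hP.
  by rewrite len_adj // hab addn1.
have hc : a.+1 < N by (have := ltn_ord b; lia).
set c := Ordinal hc.
have ac : (c : nat) = a.+1 by [].
have cb : (b : nat) = c + d.+1 by rewrite ac hab; lia.
have nab : a != b by rewrite ordE; lia.
have ncb : c != b by rewrite ordE; lia.
have nac : a != c by rewrite ordE; lia.
have nca : c != a by rewrite ordE; lia.
have nba : b != a by rewrite ordE; lia.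
have nbc : b != c by rewrite ordE; lia.
have -> : (w * tperm a b = w * tperm a c * tperm c b * tperm a c)%g.
  by rewrite (tperm_conj3 nab ncb) !mulgA.
set P := (w^-1)%g.
have Pinj : forall x y : 'I_N, (P x : nat) = P y -> x = y.
  by move=> x y /val_inj /perm_inj.
have hPca : (P c : nat) != P a by apply/eqP => /Pinj /eqP; rewrite (negbTE nca).
have hPcb : (P c : nat) != P b by apply/eqP => /Pinj /eqP; rewrite (negbTE ncb).
have E1 : forall x, ((w * tperm a c)^-1)%g x = P (tperm a c x).
  by move=> x; rewrite invMg tpermV permM.
have E2 : forall x, ((w * tperm a c * tperm c b)^-1)%g x = P (tperm a c (tperm c b x)).
  by move=> x; rewrite invMg tpermV permM E1.
have hI : len (w * tperm a c)%g < len (w * tperm a c * tperm c b)%g.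
  by apply: IH => //; rewrite !E1 tpermR (tpermD nab ncb).
case: (ltngtP (P c) (P a)) => [h|h|h]; last by rewrite h eqxx in hPca.
- have h1 := len_adj' ac (w := w) h.
  have h3 : len (w * tperm a c * tperm c b * tperm a c)%g =
            (len (w * tperm a c * tperm c b)%g).+1.
    apply: len_adj => //; rewrite !E2 (tpermD nca nba) !tpermL (tpermD nab ncb).
    exact: ltn_trans h hP.
  lia.
- have h1 := len_adj ac (w := w) h.
  case: (ltngtP (P c) (P b)) => [h'|h'|h']; last by rewrite h' eqxx in hPcb.
  + have h3 : len (w * tperm a c * tperm c b * tperm a c)%g =
            (len (w * tperm a c * tperm c b)%g).+1.
      by apply: len_adj => //; rewrite !E2 (tpermD nca nba) !tpermL (tpermD nab ncb).
    lia.
  + have h3 : (len (w * tperm a c * tperm c b * tperm a c)%g).+1 =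
            len (w * tperm a c * tperm c b)%g.
      by apply: len_adj' => //; rewrite !E2 (tpermD nca nba) !tpermL (tpermD nab ncb).
    lia.
Qed.

Lemma len_swap (w : 'S_N) (a b : 'I_N) : a < b ->
  (w^-1)%g a < (w^-1)%g b -> len w < len (w * tperm a b)%g.
Proof.
move=> hab; apply: (len_swap_gen (d := b - a.+1)); lia.
Qed.

Lemma len_swap3 (w : 'S_N) (a b c : 'I_N) : a < c -> c < b ->
  (w^-1)%g a < (w^-1)%g c -> (w^-1)%g c < (w^-1)%g b ->
  len w + 3 <= len (w * tperm a b)%g.
Proof.
move=> hac hcb h1 h2.
have nab : a != b by rewrite ordE; lia.
have ncb : c != b by rewrite ordE; lia.
have nca : c != a by rewrite ordE; lia.
have nba : b != a by rewrite ordE; lia.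
have -> : (w * tperm a b = w * tperm a c * tperm c b * tperm a c)%g.
  by rewrite (tperm_conj3 nab ncb) !mulgA.
set P := (w^-1)%g.
have E1 : forall x, ((w * tperm a c)^-1)%g x = P (tperm a c x).
  by move=> x; rewrite invMg tpermV permM.
have E2 : forall x, ((w * tperm a c * tperm c b)^-1)%g x = P (tperm a c (tperm c b x)).
  by move=> x; rewrite invMg tpermV permM E1.
have H1 : len w < len (w * tperm a c)%g by apply: len_swap.
have H2 : len (w * tperm a c)%g < len (w * tperm a c * tperm c b)%g.
  by apply: len_swap => //; rewrite !E1 tpermR (tpermD nab ncb); apply: ltn_trans h2.
have H3 : len (w * tperm a c * tperm c b)%g < len (w * tperm a c * tperm c b * tperm a c)%g.
  by apply: len_swap => //; rewrite !E2 (tpermD nca nba) !tpermL (tpermD nab ncb).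
lia.
Qed.

Lemma len1 : len 1%g = 0.
Proof. by rewrite /len invg1 /inv big1 // => p _; rewrite !perm1; case: (ltngtP p.1 p.2). Qed.

Lemma mono_id (f : 'I_N -> 'I_N) :
  (forall i j : 'I_N, (j : nat) = i.+1 -> f i < f j) -> forall i, f i = i.
Proof.
move=> hf.
have low : forall n (i : 'I_N), (i : nat) = n -> n <= f i.
  elim=> [//|n IH] i hi.
  have hn : n < N by have := ltn_ord i; lia.
  have := IH (Ordinal hn) erefl; have := hf (Ordinal hn) i hi; simpl; lia.
have up : forall d (i : 'I_N), i + d = N.-1 -> f i + d <= N.-1.
  elim=> [|d IH] i hi.
    by have := ltn_ord (f i); rewrite addn0; lia.
  have hn : i.+1 < N by have := ltn_ord i; lia.
  have := IH (Ordinal hn) (esym (etrans (esym hi) (addnS _ _))).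
  have := hf i (Ordinal hn) erefl; simpl; lia.
move=> i; apply: val_inj => /=.
have := low i i erefl; have := up (N.-1 - i) i (ltac:(have := ltn_ord i; lia)); lia.
Qed.

End Perm.

Section PermM.
Variable m : nat.
Local Notation N := m.+1.

Lemma lo_val (k : 'I_m) : (ord_lo k : nat) = k. Proof. by []. Qed.
Lemma hi_val (k : 'I_m) : (ord_hi k : nat) = k.+1. Proof. by rewrite /= /bump add1n. Qed.

Definition des (w : 'S_N) (k : 'I_m) := (w^-1)%g (ord_hi k) < (w^-1)%g (ord_lo k).

Lemma lo_hi_neq (k : 'I_m) : ord_lo k != ord_hi k.
Proof. by rewrite ordE lo_val hi_val; lia. Qed.

Lemma len_up (w : 'S_N) k : ~~ des w k -> len (w * sw k)%g = (len w).+1.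
Proof.
rewrite /des -leqNgt leq_eqVlt => /orP [/eqP h|h].
  by move/val_inj/perm_inj: h => e; move: (lo_hi_neq k); rewrite e eqxx.
by apply: len_adj => //; rewrite hi_val.
Qed.

Lemma len_down (w : 'S_N) k : des w k -> (len (w * sw k)%g).+1 = len w.
Proof. by move=> h; apply: len_adj' => //; rewrite hi_val. Qed.

Lemma wordperm_rcons (s : seq 'I_m) k : wordperm (rcons s k) = (wordperm s * sw k)%g.
Proof. by rewrite /wordperm big_rcons. Qed.

Lemma wordperm_nil : wordperm ([::] : seq 'I_m) = 1%g.
Proof. by rewrite /wordperm big_nil. Qed.

Lemma len_wordperm (s : seq 'I_m) : len (wordperm s) <= size s.
Proof.
elim/last_ind: s => [|s k IH]; first by rewrite wordperm_nil len1.
rewrite wordperm_rcons size_rcons.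
case h : (des (wordperm s) k).
  by have := len_down h; lia.
by rewrite len_up ?h.
Qed.

Lemma sw2 k : (sw k * sw k = 1 :> 'S_N)%g.
Proof. exact: tperm2. Qed.

Lemma nodes_one (w : 'S_N) : (forall k, ~~ des w k) -> w = 1%g.
Proof.
move=> h.
have hP : forall i, (w^-1)%g i = i.
  apply: mono_id => i j hij.
  have hk : (i : nat) < m by have := ltn_ord j; lia.
  have ej : j = ord_hi (Ordinal hk) by apply/eqP; rewrite ordE hi_val hij.
  have ei : i = ord_lo (Ordinal hk) by apply/eqP; rewrite ordE.
  rewrite ei ej.
  have := h (Ordinal hk); rewrite /des -leqNgt leq_eqVlt => /orP [/eqP e|//].
  by move/val_inj/perm_inj: e => e; move: (lo_hi_neq (Ordinal hk)); rewrite e eqxx.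
have : (w^-1 = 1)%g by apply/permP => i; rewrite hP perm1.
by move/(congr1 (fun x => x^-1)%g); rewrite invgK invg1.
Qed.

Lemma coxlen_len (w : 'S_N) : coxlen w (len w).
Proof.
split; last by move=> s <-; exact: len_wordperm.
move: {2}(len w) (leqnn (len w)) => n; elim: n w => [|n IH] w hw.
  have : forall k, ~~ des w k.
    move=> k; apply/negP => hd; have := len_down hd; lia.
  move/nodes_one => ->; exists [::]; by rewrite wordperm_nil len1.
case: (boolP [exists k, des w k]) => [/existsP [k hk]|].
  have hl := len_down hk.
  have hl' : len (w * sw k)%g <= n by move: hw; rewrite -hl.
  have [s [hs1 hs2]] := IH (w * sw k)%g hl'.
  exists (rcons s k); rewrite size_rcons wordperm_rcons; split.
    by rewrite hs1 hl.
  by rewrite hs2 -mulgA sw2 mulg1.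
rewrite negb_exists => /forallP /nodes_one ->; exists [::]; by rewrite wordperm_nil len1.
Qed.

Lemma coxlen_uniq (w : 'S_N) k : coxlen w k -> k = len w.
Proof.
move=> [[s [hs1 hs2]] hmin].
have [[s' [h1 h2]] hmin'] := coxlen_len w.
have := hmin s' h2; have := hmin' s hs2; lia.
Qed.

Lemma reducedP (s : seq 'I_m) : reduced s <-> len (wordperm s) = size s.
Proof.
split.
  move=> hr; have [[s' [h1 h2]] _] := coxlen_len (wordperm s).
  have := hr s' h2; have := len_wordperm s; lia.
move=> h s' e; rewrite -h -e; exact: len_wordperm.
Qed.

Definition leB (x y : 'S_N) := x = y \/ bruhat_lt x y.

Lemma leB_refl x : leB x x. Proof. by left. Qed.
Lemma leB_trans x y z : leB x y -> leB y z -> leB x z.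
Proof.
move=> [->|h1] // [<-|h2]; first by right.
by right; apply: t_trans h1 h2.
Qed.
Lemma step_leB x y : bruhat_step x y -> leB x y.
Proof. by move=> h; right; apply: t_step. Qed.

Lemma mk_step (x : 'S_N) (a b : 'I_N) : a != b -> len x < len (x * tperm a b)%g ->
  bruhat_step x (x * tperm a b)%g.
Proof.
move=> nab hl; exists a, b; split=> //; split=> //.
by exists (len x), (len (x * tperm a b)%g); split; [exact: coxlen_len|split; [exact: coxlen_len|done]].
Qed.

Lemma step_len x y : bruhat_step x y ->
  exists a b : 'I_N, a < b /\ y = (x * tperm a b)%g /\ len x < len y.
Proof.
move=> [a [b [nab [-> [k1 [k2 [h1 [h2 h3]]]]]]]].
move: h3; rewrite (coxlen_uniq h1) (coxlen_uniq h2) => hl.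
case: (ltngtP a b) => [h|h|/val_inj e]; last by move: nab; rewrite e eqxx.
  by exists a, b.
  by exists b, a; do !split => //; rewrite tpermC.
Qed.

Definition mx (x : 'S_N) k := if des x k then x else (x * sw k)%g.

Lemma conj_sw (x : 'S_N) a b k :
  (x * tperm a b * sw k = x * sw k * tperm (sw k a) (sw k b))%g.
Proof.
rewrite -tpermJ /conjg /sw tpermV !mulgA -(mulgA x (tperm (ord_lo k) (ord_hi k))) tperm2 mulg1.
by [].
Qed.

Lemma up_leB (w : 'S_N) k : ~~ des w k -> leB w (w * sw k)%g.
Proof.
move=> h; apply: step_leB; apply: mk_step; first exact: lo_hi_neq.
by rewrite len_up.
Qed.

Lemma down_leB (w : 'S_N) k : des w k -> leB (w * sw k)%g w.
Proof.
move=> h.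
have e : (w * sw k * sw k = w)%g by rewrite -mulgA sw2 mulg1.
rewrite -{2}e; apply: step_leB; apply: mk_step; first exact: lo_hi_neq.
have h1 := len_down h.
have -> : (w * sw k * tperm (ord_lo k) (ord_hi k))%g = w by exact: e.
by rewrite -h1.
Qed.

Lemma Z1 x y k : bruhat_step x y -> leB (mx x k) (mx y k).
Proof.
move=> /step_len [a [b [hab [-> hl]]]].
move: hl; set z := (x * tperm a b)%g => hl.
set P := (x^-1)%g.
have nab : a != b by rewrite ordE; lia.
have Pinj : forall u v, (P u : nat) = P v -> u = v by move=> u v /val_inj /perm_inj.
have Q : forall v, (z^-1)%g v = P (tperm a b v) by move=> v; rewrite /z invMg tpermV permM.
have hP : P a < P b.
  rewrite ltnNge leq_eqVlt; apply/negP => /orP [/eqP /Pinj e | h].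
    by move: nab; rewrite e eqxx.
  have : len z < len (z * tperm a b)%g by apply: len_swap => //; rewrite !Q tpermL tpermR.
  rewrite /z -mulgA tperm2 mulg1; move: hl; rewrite /z; lia.
rewrite /mx; case: (boolP (des x k)) => dx; case: (boolP (des z k)) => dz.
- by apply: step_leB; apply: mk_step.
- apply: leB_trans (step_leB (mk_step nab hl)) _; exact: up_leB.
-
  have hx : P (ord_lo k) < P (ord_hi k).
    move: dx; rewrite /des -leqNgt leq_eqVlt => /orP [/eqP /Pinj e|//].
    by move: (lo_hi_neq k); rewrite e eqxx.
  have hy : P (tperm a b (ord_hi k)) < P (tperm a b (ord_lo k)) by move: dz; rewrite /des !Q.
  have lv := lo_val k; have hv := hi_val k.
  have nlh := lo_hi_neq k.
  have nhl : ord_hi k != ord_lo k by rewrite eq_sym.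
  suff [e|[c [h1 [h2 [h3 h4]]]]] : tperm a b = sw k \/
      exists c : 'I_N, a < c /\ c < b /\ P a < P c /\ P c < P b.
    + by left; rewrite /z e.
    + have H3 := len_swap3 h1 h2 h3 h4.
      have H4 := len_up dx.
      have H5 := len_down dz.
      apply: leB_trans (down_leB dz).
      apply: step_leB; rewrite /z conj_sw; apply: mk_step.
        by apply/eqP => /perm_inj /eqP; rewrite (negbTE nab).
      rewrite -conj_sw; move: H3 H4 H5; rewrite -/z; lia.
  case: (eqVneq a (ord_lo k)) => [ea|na].
    case: (eqVneq b (ord_hi k)) => [eb|nb]; first by left; rewrite ea eb.
    right; exists (ord_hi k); move: hy; rewrite ea tpermL (tpermD nlh nb) => hy.
    have hab' : (k:nat) < b by move: hab; rewrite ea lv.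
    have nb' : (b:nat) != k.+1 by move: nb; rewrite ordE hv.
    split; first by rewrite lv hv.
    split; first by rewrite hv; lia.
    by split.
  case: (eqVneq b (ord_hi k)) => [eb|nb].
    right; exists (ord_lo k); move: hy; rewrite eb tpermR (tpermD na nhl) => hy.
    have hab' : (a:nat) < k.+1 by move: hab; rewrite eb hv.
    have na' : (a:nat) != k by move: na; rewrite ordE lv.
    split; first by rewrite lv; lia.
    split; first by rewrite lv hv.
    by split.
  case: (eqVneq b (ord_lo k)) => [eb2|nb2].
    have nah : a != ord_hi k by rewrite ordE hv; move: hab; rewrite eb2 lv; lia.
    move: hy; rewrite eb2 tpermR (tpermD nah nlh) => hy.
    have : P a < P (ord_hi k) by apply: ltn_trans hx; rewrite -eb2.
    lia.
  case: (eqVneq a (ord_hi k)) => [ea2|na2].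
    move: hy; rewrite ea2 tpermL (tpermD nhl nb2) => hy.
    have : P (ord_lo k) < P b by apply: ltn_trans hx _; rewrite -ea2.
    lia.
  move: hy; rewrite (tpermD na2 nb) (tpermD na nb2); lia.
- apply: step_leB; rewrite /z conj_sw; apply: mk_step.
    by apply/eqP => /perm_inj /eqP; rewrite (negbTE nab).
  rewrite -conj_sw -/z len_up // len_up //.
Qed.

Lemma Zprop u w k : leB u w -> leB (mx u k) (mx w k).
Proof.
move=> [->|h]; first exact: leB_refl.
elim: h => [x y /Z1|x y z _ IH1 _ IH2]; first by [].
exact: leB_trans IH1 IH2.
Qed.

Lemma Zup u w k : leB u w -> ~~ des u k -> ~~ des w k -> leB (u * sw k)%g (w * sw k)%g.
Proof. by move=> h du dw; have := Zprop k h; rewrite /mx (negbTE du) (negbTE dw). Qed.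

Lemma inv_sw (w : 'S_N) a x : ((w * sw a)^-1)%g x = (w^-1)%g (sw a x).
Proof. by rewrite invMg /sw tpermV permM. Qed.

Lemma ord_eq (x y : 'I_N) : (x : nat) = y -> x = y.
Proof. exact: val_inj. Qed.

Lemma sw_braid (k l : 'I_m) : (l : nat) = k.+1 ->
  (sw k * sw l * sw k = sw l * sw k * sw l)%g.
Proof.
move=> hl.
have e : ord_hi k = ord_lo l by apply: ord_eq; rewrite hi_val lo_val.
have n1 : ord_lo l != ord_lo k by rewrite ordE !lo_val hl; lia.
have n2 : ord_hi l != ord_lo k by rewrite ordE lo_val hi_val hl; lia.
have n3 : ord_lo k != ord_hi l by rewrite eq_sym.
have n4 : ord_hi k != ord_hi l by rewrite ordE !hi_val hl; lia.
have E1 : (sw k * sw l * sw k = sw l ^ sw k)%g by rewrite /conjg /sw tpermV mulgA.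
have E2 : (sw l * sw k * sw l = sw k ^ sw l)%g by rewrite /conjg /sw tpermV mulgA.
rewrite E1 E2 /sw !tpermJ -e tpermR (tpermD n3 n4) e tpermL (tpermD n1 n2).
done.
Qed.

Lemma sw_comm (k a : 'I_m) : (k : nat) + 2 <= a \/ (a : nat) + 2 <= k ->
  (sw k * sw a = sw a * sw k)%g.
Proof.
move=> h.
have n1 : ord_lo k != ord_lo a by rewrite ordE !lo_val; lia.
have n2 : ord_hi k != ord_lo a by rewrite ordE lo_val hi_val; lia.
have n3 : ord_lo k != ord_hi a by rewrite ordE lo_val hi_val; lia.
have n4 : ord_hi k != ord_hi a by rewrite ordE !hi_val; lia.
have E : (sw a ^ sw k = sw a)%g by rewrite /sw tpermJ (tpermD n1 n2) (tpermD n3 n4).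
move: E; rewrite /conjg /sw tpermV => E.
by rewrite -{1}E !mulgA tperm2 mul1g.
Qed.

Lemma des_comm (w : 'S_N) (k a : 'I_m) : (k : nat) + 2 <= a \/ (a : nat) + 2 <= k ->
  des w k -> des (w * sw a)%g k.
Proof.
move=> h; rewrite /des !inv_sw.
have n1 : ord_lo a != ord_lo k by rewrite ordE !lo_val; lia.
have n2 : ord_hi a != ord_lo k by rewrite ordE lo_val hi_val; lia.
have n3 : ord_lo a != ord_hi k by rewrite ordE lo_val hi_val; lia.
have n4 : ord_hi a != ord_hi k by rewrite ordE !hi_val; lia.
by rewrite /sw (tpermD n1 n2) (tpermD n3 n4).
Qed.

Lemma des_braid1 (w : 'S_N) (k a : 'I_m) : (a : nat) = k.+1 ->
  des w k -> des w a -> des (w * sw a)%g k /\ des (w * sw a * sw k)%g a.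
Proof.
move=> ha; rewrite /des !inv_sw => dk da.
have e : ord_lo a = ord_hi k by apply: ord_eq; rewrite hi_val lo_val.
have n1 : ord_lo a != ord_lo k by rewrite ordE !lo_val ha; lia.
have n2 : ord_hi a != ord_lo k by rewrite ordE lo_val hi_val ha; lia.
have n3 : ord_lo k != ord_hi a by rewrite eq_sym.
have n4 : ord_hi k != ord_hi a by rewrite ordE !hi_val ha; lia.
split.
  rewrite /sw -e tpermL (tpermD n1 n2); apply: ltn_trans da _; rewrite e; exact: dk.
rewrite /sw [tperm (ord_lo k) _ (ord_hi a)]tpermD // tpermR e tpermR -e [tperm (ord_lo a) _ (ord_lo k)]tpermD //. by rewrite e.
Qed.

Lemma des_braid2 (w : 'S_N) (k a : 'I_m) : (k : nat) = a.+1 ->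
  des w k -> des w a -> des (w * sw a)%g k /\ des (w * sw a * sw k)%g a.
Proof.
move=> hk; rewrite /des !inv_sw => dk da.
have e : ord_lo k = ord_hi a by apply: ord_eq; rewrite hi_val lo_val.
have n1 : ord_lo a != ord_hi k by rewrite ordE lo_val hi_val hk; lia.
have n2 : ord_hi a != ord_hi k by rewrite ordE !hi_val hk; lia.
have n3 : ord_lo a != ord_lo k by rewrite ordE !lo_val hk; lia.
have n4 : ord_lo a != ord_hi k by rewrite ordE lo_val hi_val hk; lia.
split.
  rewrite /sw (tpermD n1 n2) e tpermR; apply: ltn_trans dk _; rewrite e; exact: da.
rewrite /sw [tperm (ord_lo k) _ (ord_lo a)]tpermD 1?eq_sym // tpermL -e tpermL [tperm (ord_lo a) _ (ord_hi k)]tpermD //; exact: lo_hi_neq.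
Qed.

Lemma len_step (w : 'S_N) k : len (w * sw k)%g = (len w).+1 \/ (len (w * sw k)%g).+1 = len w.
Proof. by case: (boolP (des w k)) => h; [right; apply: len_down | left; apply: len_up]. Qed.

Lemma red_rcons (z : seq 'I_m) a : reduced (rcons z a) ->
  reduced z /\ des (wordperm (rcons z a)) a.
Proof.
rewrite !reducedP wordperm_rcons size_rcons => h.
have hz := len_wordperm z.
have e : (wordperm z * sw a * sw a = wordperm z)%g by rewrite -mulgA sw2 mulg1.
case: (boolP (des (wordperm z * sw a)%g a)) => d.
  split=> //; have := len_down d; rewrite e h; lia.
have := len_up d; rewrite e h; lia.
Qed.

Lemma red_del (z z' : seq 'I_m) k : reduced z -> des (wordperm z) k ->
  (wordperm z' * sw k)%g = wordperm z -> size z = (size z').+1 -> reduced z'.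
Proof.
rewrite !reducedP => hz d e hs.
have e' : wordperm z' = (wordperm z * sw k)%g by rewrite -e -mulgA sw2 mulg1.
have := len_down d; rewrite -e' hz hs; lia.
Qed.

Lemma red_add (z : seq 'I_m) k : reduced z -> ~~ des (wordperm z) k -> reduced (rcons z k).
Proof.
rewrite !reducedP wordperm_rcons size_rcons => h d; by rewrite len_up // h.
Qed.

Lemma braid_word (x : 'S_N) (k l : 'I_m) : (l : nat) = k.+1 ->
  (x * sw k * sw l * sw k = x * sw l * sw k * sw l)%g.
Proof. by move=> h; rewrite -!mulgA (mulgA (sw k)) (mulgA (sw l)) sw_braid. Qed.

Lemma comm_word (x : 'S_N) (k a : 'I_m) : (k : nat) + 2 <= a \/ (a : nat) + 2 <= k ->
  (x * sw k * sw a = x * sw a * sw k)%g.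
Proof. by move=> h; rewrite -!mulgA sw_comm. Qed.

End PermM.

Import Order.TTheory GRing.Theory Num.Theory.
Local Open Scope ring_scope.

Section Alg.
Variables (R : idomainType) (m r : nat) (q : R) (u : 'I_r -> R).
Variables (F : 'I_r -> {poly R}) (A : algType R).
Variables (t : 'I_m.+1 -> A) (T : 'I_m -> A).

Local Notation Rt := (in_Rt t).

Lemma Rt0 : Rt 0. Proof. by have := Rt_scal t 0; rewrite scale0r. Qed.
Lemma Rt1 : Rt 1. Proof. by have := Rt_scal t 1; rewrite scale1r. Qed.
Lemma RtZ c x : Rt x -> Rt (c *: x).
Proof. by move=> h; rewrite -mulr_algl; apply: Rt_mul => //; apply: Rt_scal. Qed.
Lemma RtN x : Rt x -> Rt (- x).
Proof. by move=> h; rewrite -scaleN1r; apply: RtZ. Qed.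
Lemma RtB x y : Rt x -> Rt y -> Rt (x - y).
Proof. by move=> hx hy; apply: Rt_add => //; apply: RtN. Qed.

Lemma Rt_sum (I : Type) (s : seq I) (P : pred I) (G : I -> A) :
  (forall i, P i -> Rt (G i)) -> Rt (\sum_(i <- s | P i) G i).
Proof.
move=> h; elim/big_rec: _ => [|i x Pi hx]; first exact: Rt0.
by apply: Rt_add => //; apply: h.
Qed.

Lemma Rt_prod (I : Type) (s : seq I) (P : pred I) (G : I -> A) :
  (forall i, P i -> Rt (G i)) -> Rt (\prod_(i <- s | P i) G i).
Proof.
move=> h; elim/big_rec: _ => [|i x Pi hx]; first exact: Rt1.
by apply: Rt_mul => //; apply: h.
Qed.

Lemma Rt_horner x p : Rt x -> Rt (horner_alg x p).
Proof.
move=> hx; elim/poly_ind: p => [|p c IH].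
  by rewrite rmorph0; exact: Rt0.
rewrite rmorphD rmorphM /= horner_algX horner_algC.
by apply: Rt_add; [apply: Rt_mul | apply: Rt_scal].
Qed.

Lemma Rt_Xcorr a b : Rt (Xcorr q u F t a b).
Proof.
apply: RtZ; apply: Rt_sum => c1 _; apply: Rt_sum => c2 _; apply: RtZ.
by apply: Rt_mul; apply: Rt_horner; apply: Rt_gen.
Qed.

Lemma Rt_Bp i j : Rt (Bp q u t i j).
Proof.
apply: RtZ; apply: Rt_sum => k _; apply: Rt_prod => i' _; apply: Rt_prod => j' _.
by apply: RtZ; apply: RtB; [apply: Rt_gen | apply: Rt_scal].
Qed.

Hypothesis hq : q \is a GRing.unit.
Hypothesis hrel : Hnr_relations q u F t T.

Lemma T_comm k f : Rt f -> exists f' d, [/\ Rt f', Rt d & T k * f = f' * T k + d].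
Proof.
have [_ [_ [_ [_ [_ [hTt hX]]]]]] := hrel.
elim=> [c|i|x y _ [x' [dx [h1 h2 h3]]] _ [y' [dy [h4 h5 h6]]]
            |x y hx [x' [dx [h1 h2 h3]]] hy [y' [dy [h4 h5 h6]]]].
- exists c%:A, 0; split; [exact: Rt_scal | exact: Rt0 |].
  by rewrite addr0 mulr_algl mulr_algr.
- case: (eqVneq i (ord_lo k)) => [->|n1].
    exists (t (ord_hi k)), (- Xcorr q u F t (ord_lo k) (ord_hi k)); split.
    + exact: Rt_gen.
    + exact/RtN/Rt_Xcorr.
    + by rewrite (proj2 (hX k)).
  case: (eqVneq i (ord_hi k)) => [->|n2].
    exists (t (ord_lo k)), (Xcorr q u F t (ord_lo k) (ord_hi k)); split.
    + exact: Rt_gen.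
    + exact: Rt_Xcorr.
    + by rewrite (proj1 (hX k)).
  exists (t i), 0; split; [exact: Rt_gen | exact: Rt0 |].
  by rewrite addr0 hTt.
- exists (x' + y'), (dx + dy); split; [exact: Rt_add | exact: Rt_add |].
  by rewrite mulrDr h3 h6 mulrDl !addrA; congr (_ + _); rewrite -!addrA; congr (_ + _); rewrite addrC.
- exists (x' * y'), (x' * dy + dx * y); split.
  + exact: Rt_mul.
  + by apply: Rt_add; apply: Rt_mul.
  + by rewrite mulrA h3 mulrDl -mulrA h6 mulrDr !mulrA addrA.
Qed.

Lemma quadT k : T k * T k = (q - q^-1) *: T k + 1.
Proof.
have [hq2 _] := hrel.
have := hq2 k.
rewrite mulrDr !mulrBl mulr_algr mulr_algl mulr_algl scalerA divrr // scale1r => h.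
apply/eqP; rewrite -subr_eq0 -h; apply/eqP.
by rewrite scalerBl !opprD opprK !addrA.
Qed.

Lemma prodT_rcons s k : prodT T (rcons s k) = prodT T s * T k.
Proof. by rewrite /prodT big_rcons. Qed.
Lemma prodT_cons s k : prodT T (k :: s) = T k * prodT T s.
Proof. by rewrite /prodT big_cons. Qed.
Lemma prodT_nil : prodT T [::] = 1.
Proof. by rewrite /prodT big_nil. Qed.

Lemma EX : forall n (z : seq 'I_m), (size z <= n)%N -> reduced z ->
  forall k, des (wordperm z) k ->
  exists z', [/\ reduced z', (wordperm z' * sw k)%g = wordperm z,
             size z = (size z').+1 & prodT T z = prodT T z' * T k].
Proof.
have [_ [_ [hbraid [hcomm _]]]] := hrel.
elim=> [|n IH] z hn hz k hd.
  move: hn; rewrite leqn0 size_eq0 => /eqP ez; move: hd; rewrite ez wordperm_nil /des invg1 !perm1.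
  by rewrite lo_val hi_val; lia.
case/lastP: z hn hz hd => [|z0 a] hn hz hd.
  by move: hd; rewrite wordperm_nil /des invg1 !perm1 lo_val hi_val; lia.
have [hz0 hda] := red_rcons hz.
move: hn; rewrite size_rcons ltnS => hn.
have hw : wordperm (rcons z0 a) = (wordperm z0 * sw a)%g by rewrite wordperm_rcons.
have hw0 : wordperm z0 = (wordperm (rcons z0 a) * sw a)%g by rewrite hw -mulgA sw2 mulg1.
case: (eqVneq a k) => [eak|nak].
  by exists z0; split=> //; rewrite ?size_rcons ?prodT_rcons -?eak.
have nak' : (a : nat) != k by [].
rewrite prodT_rcons.
have [hc|[hb1|hb2]] : ((k : nat) + 2 <= a \/ (a : nat) + 2 <= k)%N \/
    (a : nat) = k.+1 \/ (k : nat) = a.+1 by lia.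
- have hd0 : des (wordperm z0) k by rewrite hw0; apply: des_comm.
  have [z1 [hz1 e1 s1 p1]] := IH z0 hn hz0 k hd0.
  exists (rcons z1 a); split.
  + apply: (red_del hz hd); last by rewrite !size_rcons s1.
    by rewrite wordperm_rcons -(comm_word _ hc) e1 ?hw.
  + by rewrite wordperm_rcons -(comm_word _ hc) e1 ?hw.
  + by rewrite !size_rcons s1.
  + rewrite p1 prodT_rcons -!mulrA; congr (_ * _); exact: hcomm hc.
- have [hd0 hd1'] := des_braid1 hb1 hd hda.
  rewrite -hw0 in hd0.
  have [z1 [hz1 e1 s1 p1]] := IH z0 hn hz0 k hd0.
  have hd1 : des (wordperm z1) a.
    have : wordperm z1 = (wordperm (rcons z0 a) * sw a * sw k)%g.
      by rewrite -hw0 -e1 -mulgA sw2 mulg1.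
    by move=> ->.
  have hn1 : (size z1 <= n)%N by move: hn; rewrite s1; lia.
  have [z2 [hz2 e2 s2 p2]] := IH z1 hn1 hz1 a hd1.
  exists (rcons (rcons z2 k) a); split.
  + apply: (red_del hz hd); last by rewrite !size_rcons s1 s2.
    by rewrite !wordperm_rcons (braid_word _ hb1) e2 e1 ?hw.
  + by rewrite !wordperm_rcons (braid_word _ hb1) e2 e1 ?hw.
  + by rewrite !size_rcons s1 s2.
  + rewrite p1 p2 !prodT_rcons -!mulrA; congr (_ * _); rewrite !mulrA; symmetry; exact: hbraid hb1.
- have [hd0 hd1'] := des_braid2 hb2 hd hda.
  rewrite -hw0 in hd0.
  have [z1 [hz1 e1 s1 p1]] := IH z0 hn hz0 k hd0.
  have hd1 : des (wordperm z1) a.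
    have : wordperm z1 = (wordperm (rcons z0 a) * sw a * sw k)%g.
      by rewrite -hw0 -e1 -mulgA sw2 mulg1.
    by move=> ->.
  have hn1 : (size z1 <= n)%N by move: hn; rewrite s1; lia.
  have [z2 [hz2 e2 s2 p2]] := IH z1 hn1 hz1 a hd1.
  exists (rcons (rcons z2 k) a); split.
  + apply: (red_del hz hd); last by rewrite !size_rcons s1 s2.
    by rewrite !wordperm_rcons -(braid_word _ hb2) e2 e1 ?hw.
  + by rewrite !wordperm_rcons -(braid_word _ hb2) e2 e1 ?hw.
  + by rewrite !size_rcons s1 s2.
  + rewrite p1 p2 !prodT_rcons -!mulrA; congr (_ * _); rewrite !mulrA; exact: hbraid hb2.
Qed.

Lemma sum_exists (I J : eqType) (l0 : seq I) (G : I -> A) (H : J -> A) (Pj : J -> Prop) :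
  (forall x, x \in l0 -> exists ly : seq J, G x = \sum_(y <- ly) H y /\ forall y, y \in ly -> Pj y) ->
  exists l, \sum_(x <- l0) G x = \sum_(y <- l) H y /\ forall y, y \in l -> Pj y.
Proof.
elim: l0 => [|x l0 IH] h.
  by exists [::]; split=> //; rewrite !big_nil.
have [ly [e1 h1]] := h x (mem_head _ _).
have [l [e2 h2]] := IH (fun x' hx' => h x' (mem_behead (s := x :: l0) hx')).
exists (ly ++ l); split; first by rewrite big_cons big_cat e1 e2.
by move=> y; rewrite mem_cat => /orP [/h1|/h2].
Qed.

Lemma subseq_rconsP (v p : seq 'I_m) k : subseq v (rcons p k) ->
  subseq v p \/ exists v0, v = rcons v0 k /\ subseq v0 p.
Proof.
rewrite -subseq_rev rev_rcons.
case e : (rev v) => [|y s'].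
  by move: e => /(congr1 rev); rewrite revK /= => ->; left; exact: sub0seq.
rewrite /=; case: eqP => [ey|ny] h.
  right; exists (rev s'); split.
    by rewrite -ey -rev_cons -e revK.
  by rewrite -subseq_rev revK.
by left; rewrite -subseq_rev e.
Qed.

Lemma expand (s : seq 'I_m) : exists l : seq (A * seq 'I_m),
  (forall x, x \in l -> [/\ Rt x.1, subseq x.2 s & (size x.2 < size s)%N]) /\
  prodg q u t T s = prodT T s + \sum_(x <- l) x.1 * prodT T x.2.
Proof.
elim: s => [|k s [l0 [h0 e0]]].
  by exists [::]; split=> //; rewrite big_nil addr0 /prodg /prodT !big_nil.
set B := Bp q u t (ord_lo k) (ord_hi k).
have hB : Rt B by apply: Rt_Bp.
have hall : forall x, x \in l0 -> exists ly : seq (A * seq 'I_m),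
    (T k + B) * (x.1 * prodT T x.2) = \sum_(y <- ly) y.1 * prodT T y.2 /\
    forall y, y \in ly -> [/\ Rt y.1, subseq y.2 (k :: s) & (size y.2 < size (k :: s))%N].
  move=> x hx; have [hx1 hx2 hx3] := h0 x hx.
  have [f' [d [hf hd e]]] := T_comm k hx1.
  exists [:: (f', k :: x.2); (d, x.2); (B * x.1, x.2)]; split.
    rewrite !big_cons big_nil addr0 mulrDl mulrA e mulrDl -mulrA -prodT_cons -!mulrA addrA.
    by rewrite mulrA.
  move=> y; rewrite !inE => /orP [/eqP ->|/orP [/eqP ->|/eqP ->]] /=.
  - by split=> //=; rewrite eqxx.
  - by split=> //; [apply: subseq_trans hx2 (subseq_cons _ _) | apply: ltn_trans hx3 _].
  - by split; [apply: Rt_mul | apply: subseq_trans hx2 (subseq_cons _ _) | apply: ltn_trans hx3 _].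
have [l1 [e1 h1]] := @sum_exists _ _ l0 (fun x => (T k + B) * (x.1 * prodT T x.2))
   (fun y => y.1 * prodT T y.2)
   (fun y => [/\ Rt y.1, subseq y.2 (k :: s) & (size y.2 < size (k :: s))%N]) hall.
exists ((B, s) :: l1); split.
  move=> x; rewrite inE => /orP [/eqP ->|/h1 //].
  by split=> //=; apply: subseq_cons.
rewrite /prodg big_cons -/(prodg q u t T s) e0.
by rewrite big_cons /= -e1 -mulr_sumr prodT_cons /g -/B mulrDr mulrDl !addrA.
Qed.

Lemma red_nodes (p : seq 'I_m) k : reduced (rcons p k) -> reduced p /\ ~~ des (wordperm p) k.
Proof.
move=> h; have [hp _] := red_rcons h; split=> //.
apply/negP => d; move: h; rewrite !reducedP wordperm_rcons size_rcons.
have := len_down d; have := len_wordperm p; lia.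
Qed.

Lemma reduce (p : seq 'I_m) : reduced p -> forall v, subseq v p ->
  exists l : seq (A * seq 'I_m),
  prodT T v = \sum_(y <- l) y.1 * prodT T y.2 /\
  forall y, y \in l -> [/\ Rt y.1, reduced y.2, (size y.2 <= size v)%N &
                            leB (wordperm y.2) (wordperm p)].
Proof.
elim/last_ind: p => [_ v|p k IH hpk v hv].
  rewrite subseq0 => /eqP ->.
  exists [:: (1, [::])]; split; first by rewrite big_cons big_nil addr0 mul1r.
  move=> y; rewrite inE => /eqP -> /=; split=> //; first exact: Rt1.
  exact: leB_refl.
have [hp hnd] := red_nodes hpk.
have hle : leB (wordperm p) (wordperm (rcons p k)) by rewrite wordperm_rcons; exact: up_leB.
case: (subseq_rconsP hv) => [hv'|[v0 [-> hv0]]].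
  have [l [e h]] := IH hp v hv'.
  exists l; split=> // y /h [h1 h2 h3 h4]; split=> //; exact: leB_trans h4 hle.
have [l0 [e0 h0]] := IH hp v0 hv0.
have hall : forall y, y \in l0 -> exists ly : seq (A * seq 'I_m),
    y.1 * prodT T y.2 * T k = \sum_(x <- ly) x.1 * prodT T x.2 /\
    forall x, x \in ly -> [/\ Rt x.1, reduced x.2, (size x.2 <= size (rcons v0 k))%N &
                            leB (wordperm x.2) (wordperm (rcons p k))].
  move=> y hy; have [h1 h2 h3 h4] := h0 y hy.
  case: (boolP (des (wordperm y.2) k)) => d.
    have [z' [hz1 hz2 hz3 hz4]] := @EX (size y.2) y.2 (leqnn _) h2 k d.
    exists [:: ((q - q^-1) *: y.1, y.2); (y.1, z')]; split.
      rewrite !big_cons big_nil addr0 {1}hz4 -mulrA -mulrA quadT mulrDr mulr1.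
      rewrite mulrDr -!scalerAl -!scalerAr -hz4.
      by rewrite scalerAl.
    move=> x; rewrite !inE => /orP [/eqP ->|/eqP ->] /=.
      split=> //; [exact: RtZ | rewrite size_rcons; exact: leqW h3 | exact: leB_trans h4 hle].
    split=> //; first by rewrite size_rcons; apply: leqW; apply: ltnW; rewrite -hz3.
    apply: leB_trans (leB_trans h4 hle).
    have -> : wordperm z' = (wordperm y.2 * sw k)%g by rewrite -hz2 -mulgA sw2 mulg1.
    exact: down_leB.
  exists [:: (y.1, rcons y.2 k)]; split.
    by rewrite big_cons big_nil addr0 prodT_rcons mulrA.
  move=> x; rewrite inE => /eqP -> /=; split=> //.
  - exact: red_add.
  - by rewrite !size_rcons.
  - by rewrite !wordperm_rcons; apply: Zup.
have [l [e h]] := @sum_exists _ _ l0 (fun y => y.1 * prodT T y.2 * T k)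
   (fun y => y.1 * prodT T y.2) _ hall.
exists l; split=> //.
by rewrite prodT_rcons e0 mulr_suml e.
Qed.

End Alg.

Theorem lemma3p8 (R : idomainType) (m r : nat) (hm : (1 <= m)%N) (hr : (1 <= r)%N)
  (q : R) (u : 'I_r -> R)
  (hq : q \is a GRing.unit) (hDelta : Delta u \is a GRing.unit)
  (F : 'I_r -> {poly R})
  (hFsize : forall c, (size (F c) <= r)%N)
  (hFval : forall c c', (F c).[u c'] = (c == c')%:R * Delta u)
  (A : algType R) (t : 'I_m.+1 -> A) (T : 'I_m -> A)
  (hrel : Hnr_relations q u F t T) :
  forall s : seq 'I_m, reduced s ->
    exists l : seq (A * seq 'I_m),
      (forall x, x \in l ->
         [/\ in_Rt t x.1, reduced x.2 & bruhat_lt (wordperm x.2) (wordperm s)]) /\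
      prodg q u t T s - prodT T s = \sum_(x <- l) x.1 * prodT T x.2.
Proof.
move=> s hs.
have [le [hle ee]] := expand hrel s.
have hall : forall x, x \in le -> exists ly : seq (A * seq 'I_m),
    x.1 * prodT T x.2 = \sum_(y <- ly) y.1 * prodT T y.2 /\
    forall y, y \in ly -> [/\ in_Rt t y.1, reduced y.2 & bruhat_lt (wordperm y.2) (wordperm s)].
  move=> x hx; have [h1 h2 h3] := hle x hx.
  have [l [e h]] := reduce hq hrel hs h2.
  exists [seq (x.1 * y.1, y.2) | y <- l]; split.
    by rewrite big_map e mulr_sumr; apply: eq_bigr => y _; rewrite mulrA.
  move=> y /mapP [y' hy' ->] /=; have [k1 k2 k3 k4] := h y' hy'.
  split => //; first exact: Rt_mul.
  case: k4 => // e'.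
  move/reducedP: k2; move/reducedP: hs; rewrite e' => -> e2.
  by move: h3; rewrite e2 ltnNge (leq_trans k3).
have [l [e h]] := @sum_exists _ _ _ _ le (fun x => x.1 * prodT T x.2)
   (fun y => y.1 * prodT T y.2) _ hall.
exists l; split => //.
by rewrite ee addrAC subrr add0r e.
Qed.
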